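(* If $n$ is a product of exactly $2$ or exactly $3$ primes, not necessarily distinct (i.e., $n=pq$ or $n=pqr$ with $p,q,r$ prime), then the $n\times n$ square has no perfect Mondrian partition.
   Context: A Mondrian partition of an $n\times n$ square ($n$ a positive integer) is a dissection of the square into $k\ge 2$ non-overlapping rectangles with positive integer side lengths which are pairwise non-congruent (rectangles of dimensions $a\times b$ and $b\times a$ count as congruent). It is perfect if all its rectangles have the same area. *)

(* Defs.v *)
From mathcomp Require Import all_boot.
Set Implicit Arguments. Unset Strict Implicit. Unset Printing Implicit Defensive.

(* An axis-parallel rectangle placed in the n x n square [0,n]x[0,n]:
   lower-left corner (rx, ry), width rw, height rh (all integers). *)
Record rect := Rect { rx : nat; ry : nat; rw : nat; rh : nat }.

Definition rect0 : rect := Rect 0 0 0 0.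

(* the unit cell [i,i+1]x[j,j+1] lies in rectangle r *)
Definition cell_in (r : rect) (i j : nat) : bool :=
  (rx r <= i < rx r + rw r) && (ry r <= j < ry r + rh r).

Definition area (r : rect) : nat := rw r * rh r.

Definition congruent (r1 r2 : rect) : bool :=
  ((rw r1 == rw r2) && (rh r1 == rh r2)) || ((rw r1 == rh r2) && (rh r1 == rw r2)).

(* s is a Mondrian partition of the n x n square:
   k = size s >= 2 rectangles with positive integer sides, inside the square,
   covering every unit cell exactly once (i.e. a dissection with no overlap),
   pairwise non-congruent. *)
Definition mondrian_partition (n : nat) (s : seq rect) : Prop :=
  [/\ 2 <= size s,
      (forall a, a < size s ->
         let r := nth rect0 s a in
         [/\ 0 < rw r, 0 < rh r, rx r + rw r <= n & ry r + rh r <= n]),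
      (forall i j, i < n -> j < n -> count (fun r => cell_in r i j) s = 1)
    & (forall a b, a < size s -> b < size s -> a <> b ->
         ~~ congruent (nth rect0 s a) (nth rect0 s b))].

Definition perfect_mondrian_partition (n : nat) (s : seq rect) : Prop :=
  mondrian_partition n s /\
  (forall a b, a < size s -> b < size s ->
     area (nth rect0 s a) = area (nth rect0 s b)).

(* Main.v *)
Require Import Defs.
From mathcomp Require Import all_boot.
From mathcomp Require Import zify.
Set Implicit Arguments. Unset Strict Implicit. Unset Printing Implicit Defensive.

Definition inside n r := [/\ 0 < rw r, 0 < rh r, rx r + rw r <= n & ry r + rh r <= n].
Definition cover3 n r1 r2 r3 := forall i j, i < n -> j < n ->
  cell_in r1 i j + cell_in r2 i j + cell_in r3 i j = 1.
Definition Good3 n r1 r2 r3 := [/\ [/\ inside n r1, inside n r2 & inside n r3],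
  cover3 n r1 r2 r3, (area r1 = area r2 /\ area r1 = area r3), 3 * area r1 = n * n &
  [/\ ~~ congruent r1 r2, ~~ congruent r1 r3 & ~~ congruent r2 r3]].

Lemma congC r1 r2 : congruent r1 r2 = congruent r2 r1.
Proof. rewrite /congruent; case: r1 r2 => ? ? w1 h1 [? ? w2 h2] /=.
by apply/idP/idP; case/orP=> /andP[/eqP-> /eqP->]; rewrite !eqxx ?orbT. Qed.

Lemma probe3 (b1 b2 b3 : bool) : b1 + b2 + b3 = 1 ->
  [\/ [/\ b1, ~~b2 & ~~b3], [/\ ~~b1, b2 & ~~b3] | [/\ ~~b1, ~~b2 & b3]].
Proof. by case: b1; case: b2; case: b3 => //= _; [constructor 1 | constructor 2 | constructor 3]. Qed.

Lemma Good3_swap23 n r1 r2 r3 : Good3 n r1 r2 r3 -> Good3 n r1 r3 r2.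
Proof.
move=> [[i1 i2 i3] c [a2 a3] h [n12 n13 n23]]; split=> //.
- by move=> i j Hi Hj; rewrite -(c i j Hi Hj) -!addnA [X in _ + X]addnC.
- by split; rewrite // congC.
Qed.

Lemma Good3_swap12 n r1 r2 r3 : Good3 n r1 r2 r3 -> Good3 n r2 r1 r3.
Proof.
move=> [[i1 i2 i3] c [a2 a3] h [n12 n13 n23]]; split=> //.
- by move=> i j Hi Hj; rewrite -(c i j Hi Hj) [X in X + _ = _]addnC.
- by rewrite -a2.
- by rewrite -a2.
- by split; rewrite // congC.
Qed.

Lemma cong_w r1 r2 : rw r1 = rw r2 -> 0 < rw r1 -> area r1 = area r2 -> congruent r1 r2.
Proof.
case: r1 r2 => ? ? w1 h1 [? ? w2 h2] /= -> Hw; rewrite /area /= => Ha.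
have -> : h1 = h2 by apply/eqP; rewrite -(eqn_pmul2l Hw) Ha.
by rewrite /congruent /= !eqxx.
Qed.

Lemma cong_h r1 r2 : rh r1 = rh r2 -> 0 < rh r1 -> area r1 = area r2 -> congruent r1 r2.
Proof.
case: r1 r2 => ? ? w1 h1 [? ? w2 h2] /= -> Hw; rewrite /area /= => Ha.
have -> : w1 = w2 by apply/eqP; rewrite -(eqn_pmul2r Hw) Ha.
by rewrite /congruent /= !eqxx.
Qed.

Lemma one_of (b1 b2 b3 : bool) : b1 + b2 + b3 = 1 ->
  [/\ b1 -> ~~b2 /\ ~~b3, b2 -> ~~b1 /\ ~~b3 & b3 -> ~~b1 /\ ~~b2].
Proof. by case: b1; case: b2; case: b3. Qed.

Ltac pr c i j := let H := fresh "P" in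
  have /probe3 H := c i j ltac:(lia) ltac:(lia);
  move: H; rewrite /cell_in /=.
Ltac on c i j := let H := fresh "O" in
  have [H _ _] := one_of (c i j ltac:(lia) ltac:(lia)); move: H; rewrite /cell_in /=.
Ltac tw c i j := let H := fresh "O" in
  have [_ H _] := one_of (c i j ltac:(lia) ltac:(lia)); move: H; rewrite /cell_in /=.
Ltac th c i j := let H := fresh "O" in
  have [_ _ H] := one_of (c i j ltac:(lia) ltac:(lia)); move: H; rewrite /cell_in /=.

Lemma bottom2 n r1 r2 r3 : Good3 n r1 r2 r3 ->
  cell_in r1 0 0 -> cell_in r1 n.-1 0 -> cell_in r2 0 n.-1 -> False.
Proof.
move=> [[i1 i2 i3] c [a2 a3] h [n12 n13 n23]].
move: i1 i2 i3 c a2 a3 h n12 n13 n23.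
case: r1 => x1 y1 w1 h1; case: r2 => x2 y2 w2 h2; case: r3 => x3 y3 w3 h3.
rewrite /inside /cell_in /area /=.
move=> [? ? ? ?] [? ? ? ?] [? ? ? ?] c a2 a3 h /negP n12 /negP n13 /negP n23 H1 H2 H3.
have Hw1 : w1 = n by lia. have Hx1 : x1 = 0 by lia. have Hy1 : y1 = 0 by lia.
clear H1 H2.
have Hh1 : h1 < n.
  have : h1 <= n by lia. rewrite leq_eqVlt => /orP [/eqP E|//].
  subst; nia.
tw c 0 n.-1 => /(_ H3) [_ N1].
pr c n.-1 n.-1; case=> [[P _ _]|[_ P _]|[_ N2 P4]]; first lia.
  by apply: n12; apply: cong_w; rewrite /area /=; lia.
pr c 0 h1; case=> [[P _ _]|[_ P5 _]|[_ _ P]]; [lia| |lia].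
tw c 0 y2 => O1.
have [O1' _] := O1 ltac:(lia).
have Ey2 : y2 = h1 by lia.
clear O1 O1'.
pr c n.-1 h1; case=> [[P _ _]|[_ P _]|[_ _ P6]]; [lia|lia|].
th c n.-1 y3 => O2.
have [O2' _] := O2 ltac:(lia).
have Ey3 : y3 = h1 by clear N1 N2; lia.
clear O2 O2' N1 N2.
apply: n23; apply: cong_h; rewrite /area /=; lia.
Qed.

Lemma bottom3 n r1 r2 r3 : Good3 n r1 r2 r3 ->
  cell_in r1 0 0 -> cell_in r1 n.-1 0 -> False.
Proof.
move=> G H1 H2; have G' := G.
move: G' => [[i1 i2 i3] c [a2 a3] h _].
have Hn : 0 < n by case: i1 => ? ? ? ?; move: H1; rewrite /cell_in; lia.
have /probe3 [[P _ _]|[_ P _]|[_ _ P]] := c 0 n.-1 Hn ltac:(lia).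
- case: i1 => ? ? ? ?; move: H1 H2 P; rewrite /cell_in => ? ? ?.
  have E1 : rw r1 = n by lia. have E2 : rh r1 = n by lia.
  move: h; rewrite /area E1 E2; nia.
- exact: bottom2 G H1 H2 P.
- exact: bottom2 (Good3_swap23 G) H1 H2 P.
Qed.

Definition V n r := Rect (rx r) (n - (ry r + rh r)) (rw r) (rh r).
Definition T r := Rect (ry r) (rx r) (rh r) (rw r).

Lemma cell_V n r i j : j < n -> ry r + rh r <= n ->
  cell_in (V n r) i j = cell_in r i (n.-1 - j).
Proof.
case: r => x y w h; rewrite /cell_in /= => Hj Hr.
by apply/idP/idP; lia.
Qed.

Lemma cell_T r i j : cell_in (T r) i j = cell_in r j i.
Proof. by rewrite /cell_in /= andbC. Qed.

Lemma Good3_V n r1 r2 r3 : Good3 n r1 r2 r3 -> Good3 n (V n r1) (V n r2) (V n r3).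
Proof.
move=> [[i1 i2 i3] c [a2 a3] h [n12 n13 n23]].
have iV r : inside n r -> inside n (V n r).
  by case: r => x y w hh; rewrite /inside /= => -[? ? ? ?]; split => //; lia.
split=> //; first by split; apply: iV.
move=> i j Hi Hj.
case: i1 i2 i3 => [? ? ? ?] [? ? ? ?] [? ? ? ?].
rewrite !cell_V //; apply: c => //; lia.
Qed.

Lemma Good3_T n r1 r2 r3 : Good3 n r1 r2 r3 -> Good3 n (T r1) (T r2) (T r3).
Proof.
move=> [[i1 i2 i3] c [a2 a3] h [n12 n13 n23]].
have iT r : inside n r -> inside n (T r).
  by case: r => x y w hh; rewrite /inside /= => -[? ? ? ?]; split => //; lia.
have aT r : area (T r) = area r by rewrite /area mulnC.
have cT r r' : congruent (T r) (T r') = congruent r r'.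
  by rewrite /congruent /= ![(rh _ == _) && _]andbC.
split.
- by split; apply: iT.
- by move=> i j Hi Hj; rewrite !cell_T; apply: c.
- by rewrite !aT.
- by rewrite aT.
- by rewrite !cT.
Qed.

Lemma Good3_n n r1 r2 r3 : Good3 n r1 r2 r3 -> 0 < n.
Proof. by move=> [[[? ? ? ?] _ _] _ _ _ _]; lia. Qed.

Lemma top3 n r1 r2 r3 : Good3 n r1 r2 r3 ->
  cell_in r1 0 n.-1 -> cell_in r1 n.-1 n.-1 -> False.
Proof.
move=> G H1 H2; have Hn := Good3_n G; have G' := Good3_V G.
have [[[_ _ _ I1] _ _] _ _ _ _] := G.
apply: (bottom3 G'); rewrite cell_V //; [by rewrite subn0 | by rewrite subn0].
Qed.

Lemma left3 n r1 r2 r3 : Good3 n r1 r2 r3 ->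
  cell_in r1 0 0 -> cell_in r1 0 n.-1 -> False.
Proof. by move=> G H1 H2; apply: (bottom3 (Good3_T G)); rewrite cell_T. Qed.

Lemma right3 n r1 r2 r3 : Good3 n r1 r2 r3 ->
  cell_in r1 n.-1 0 -> cell_in r1 n.-1 n.-1 -> False.
Proof. by move=> G H1 H2; apply: (top3 (Good3_T G)); rewrite cell_T. Qed.

Lemma opp3 n r1 r2 r3 : Good3 n r1 r2 r3 ->
  cell_in r1 0 0 -> cell_in r1 n.-1 n.-1 -> False.
Proof.
move=> [[[? ? ? ?] _ _] _ _ h _]; rewrite /cell_in => ? ?.
have E1 : rw r1 = n by lia. have E2 : rh r1 = n by lia.
move: h; rewrite /area E1 E2; nia.
Qed.

Lemma opp3' n r1 r2 r3 : Good3 n r1 r2 r3 ->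
  cell_in r1 n.-1 0 -> cell_in r1 0 n.-1 -> False.
Proof.
move=> [[[? ? ? ?] _ _] _ _ h _]; rewrite /cell_in => ? ?.
have E1 : rw r1 = n by lia. have E2 : rh r1 = n by lia.
move: h; rewrite /area E1 E2; nia.
Qed.

Lemma main3 n r1 r2 r3 : Good3 n r1 r2 r3 -> False.
Proof.
move=> G; have Hn := Good3_n G.
have G2 := Good3_swap12 G. have G3 := Good3_swap12 (Good3_swap23 G).
have [_ c _ _ _] := G.
have /probe3 [[A1 _ _]|[_ A1 _]|[_ _ A1]] := c 0 0 Hn Hn;
have /probe3 [[A2 _ _]|[_ A2 _]|[_ _ A2]] := c n.-1 0 ltac:(lia) Hn;
have /probe3 [[A3 _ _]|[_ A3 _]|[_ _ A3]] := c 0 n.-1 Hn ltac:(lia);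
have /probe3 [[A4 _ _]|[_ A4 _]|[_ _ A4]] := c n.-1 n.-1 ltac:(lia) ltac:(lia);
first [ exact: (bottom3 G A1 A2) | exact: (top3 G A3 A4) | exact: (left3 G A1 A3)
      | exact: (right3 G A2 A4) | exact: (opp3 G A1 A4) | exact: (opp3' G A2 A3)
      | exact: (bottom3 G2 A1 A2) | exact: (top3 G2 A3 A4) | exact: (left3 G2 A1 A3)
      | exact: (right3 G2 A2 A4) | exact: (opp3 G2 A1 A4) | exact: (opp3' G2 A2 A3)
      | exact: (bottom3 G3 A1 A2) | exact: (top3 G3 A3 A4) | exact: (left3 G3 A1 A3)
      | exact: (right3 G3 A2 A4) | exact: (opp3 G3 A1 A4) | exact: (opp3' G3 A2 A3) ].
Qed.

Definition Good2 n r1 r2 := [/\ inside n r1 /\ inside n r2,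
  (forall i j, i < n -> j < n -> cell_in r1 i j + cell_in r2 i j = 1),
  area r1 = area r2, 2 * area r1 = n * n & ~~ congruent r1 r2].

Lemma probe2 (b1 b2 : bool) : b1 + b2 = 1 -> (b1 /\ ~~ b2) \/ (~~ b1 /\ b2).
Proof. by case: b1; case: b2 => //= _; [left|right]. Qed.

Lemma main2 n r1 r2 : Good2 n r1 r2 -> False.
Proof.
case: r1 r2 => x1 y1 w1 h1 [x2 y2 w2 h2].
move=> [[[? ? ? ?] [? ? ? ?]] c a h /negP nc]; simpl in *.
have Hn : 0 < n by lia.
move: a h; rewrite /area /= => a h.
have /probe2 [[A1 _]|[_ A1]] := c 0 0 Hn Hn;
have /probe2 [[A2 _]|[_ A2]] := c n.-1 0 ltac:(lia) Hn;
have /probe2 [[A3 _]|[_ A3]] := c 0 n.-1 Hn ltac:(lia);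
have /probe2 [[A4 _]|[_ A4]] := c n.-1 n.-1 ltac:(lia) ltac:(lia);
move: c; rewrite /cell_in /= in A1 A2 A3 A4 * => c;
first [ (have E1 : w1 = n by lia); (have E2 : h1 = n by lia); subst; nia
      | (have E1 : w2 = n by lia); (have E2 : h2 = n by lia); subst; nia
      | apply: nc; apply: cong_w; rewrite /area /=; lia
      | apply: nc; apply: cong_h; rewrite /area /=; lia ].
Qed.

Fixpoint prodl (s : seq nat) : nat := if s is x :: s' then x * prodl s' else 1.

Fixpoint allm (l : nat) : seq bitseq :=
  if l is l'.+1 then [seq true :: m | m <- allm l'] ++ [seq false :: m | m <- allm l']
  else [:: [::]].

Lemma size_allm l : size (allm l) = 2 ^ l.
Proof. by elim: l => //= l IH; rewrite size_cat !size_map IH expnS mul2n addnn. Qed.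

Lemma mem_allm m : m \in allm (size m).
Proof.
elim: m => [|b m IH] //=; rewrite mem_cat.
have inj (c : bool) : injective (cons c) by move=> x y [].
by case: b; rewrite (mem_map (inj _)) IH ?orbT.
Qed.

Lemma prodl_mask s m : size m = size s ->
  prodl s = prodl (mask m s) * prodl (mask (map negb m) s).
Proof.
elim: s m => [|x s IH] [|b m] //= /eqP; rewrite eqSS => /eqP Hm; rewrite (IH _ Hm).
by case: b => /=; [rewrite mulnA | rewrite mulnCA].
Qed.

Lemma dvd_prodl s d : all prime s -> d %| prodl s ->
  exists2 m : bitseq, size m = size s & d = prodl (mask m s).
Proof.
elim: s d => [|x s IH] d /=.
  by move=> _; rewrite dvdn1 => /eqP ->; exists [::].
case/andP=> px ps Hd.
have x0 : 0 < x by apply: prime_gt0.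
case: (boolP (x %| d)) => [/dvdnP [d' Ed] | nd].
  move: Hd; rewrite Ed [d' * x]mulnC dvdn_pmul2l // => Hd.
  have [m Hm Em] := IH _ ps Hd.
  by exists (true :: m) => /=; [rewrite Hm | rewrite Em mulnC].
have cp : coprime d x by rewrite coprime_sym prime_coprime.
rewrite Gauss_dvdr // in Hd.
have [m Hm ->] := IH _ ps Hd.
by exists (false :: m); rewrite /= ?Hm.
Qed.

Definition divl s := [seq prodl (mask m s) | m <- allm (size s)].

Lemma size_divl s : size (divl s) = 2 ^ size s.
Proof. by rewrite size_map size_allm. Qed.

Lemma mem_divl s d : all prime s -> d %| prodl s -> d \in divl s.
Proof.
move=> ps /(dvd_prodl ps) [m Hm ->].
by apply: map_f; rewrite -Hm mem_allm.
Qed.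

Lemma prodl_ge s : all prime s -> 2 ^ size s <= prodl s.
Proof.
elim: s => //= x s IH /andP [px ps].
rewrite expnS; apply: leq_mul; [exact: prime_gt1 | exact: IH].
Qed.

Lemma prodl_pos s : all prime s -> 0 < prodl s.
Proof. move=> ps; apply: leq_trans (prodl_ge ps); exact: expn_gt0. Qed.

Lemma gauss_split e T w h : prime e -> w * h = e * T -> (w %| T) || (h %| T).
Proof.
move=> pe E.
case: (boolP (e %| w)) => [/dvdnP [w' Ew] | nd].
  apply/orP; right; apply/dvdnP; exists w'.
  apply/eqP; rewrite -(eqn_pmul2l (prime_gt0 pe)); apply/eqP; rewrite Ew in E; lia.
apply/orP; left.
have cp : coprime w e by rewrite coprime_sym prime_coprime.
by rewrite -(Gauss_dvdl _ cp) mulnC -E dvdn_mulr.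
Qed.

Definition Sel n A k := forall (P : pred nat) (L : seq nat),
  (forall w h, w * h = A -> w <= n -> h <= n -> P w || P h) ->
  (forall d e, d * e = A -> d <= n -> e <= n -> P d -> d \in L) ->
  k <= size L.

Lemma sq_cover A w h : w * h = A -> (w * w <= A) || (h * h <= A).
Proof.
move=> E; case: leqP => //= H1; rewrite leqNgt; apply/negP => H2.
have := ltn_mul H1 H2; rewrite -E mulnACA; lia.
Qed.

Lemma sq_le d m : d * d <= m * m -> d <= m.
Proof. move=> H; rewrite leqNgt; apply/negP => H1; have := ltn_mul H1 H1; lia. Qed.

Lemma divl4 a b c e d : d %| a * b * (c * e) -> all prime [:: a; b; c; e] ->
  d \in divl [:: a; b; c; e].
Proof. by move=> H ps; apply: mem_divl ps _; rewrite /= muln1 !mulnA; rewrite !mulnA in H. Qed.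

Lemma SP2 u v A : prime u -> prime v -> u <= v -> 4 * A = (2 * u * v) * (2 * u * v) ->
  Sel (2 * u * v) A 4 -> False.
Proof.
move=> pu pv uv HA S.
have u2 := prime_gt1 pu; have v2 := prime_gt1 pv.
have EA : A = (u * v) * (u * v) by nia.
suff : 4 <= size [:: u * v; u * u; v] by [].
apply: (S (fun d => d * d <= A) _ (fun w h E _ _ => sq_cover E)) => d e Ede Hd He /= Hsq.
have dle : d <= u * v by apply: sq_le; rewrite -EA.
have dge : u * v <= 2 * d.
  have : d * e <= d * (2 * u * v) by rewrite leq_mul2l He orbT.
  rewrite Ede EA => H.
  have Hp : 0 < u * v by nia.
  by rewrite -(leq_pmul2r Hp); nia.
have : d \in divl [:: u; u; v; v].
  apply: divl4; last by rewrite /= pu pv.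
  by apply/dvdnP; exists e; rewrite [e * d]mulnC Ede EA; nia.
rewrite /divl /= !inE !muln1.
repeat (case/orP; [move/eqP=> Ed; subst d | ]); try (move/eqP=> Ed; subst d).
all: first [ by rewrite eqxx ?orbT | exfalso; nia
           | (have E : u = v by nia); subst u; by rewrite eqxx ?orbT ].
Qed.

Lemma SP3 s A : prime s -> 6 * A = (2 * 3 * s) * (2 * 3 * s) ->
  Sel (2 * 3 * s) A 6 -> False.
Proof.
move=> ps HA S.
have s2 := prime_gt1 ps.
have EA : A = 2 * 3 * (s * s) by nia.
suff : 6 <= size [:: s; 2 * s; 3; 4; 6] by [].
apply: (S (fun d => d * d <= A) _ (fun w h E _ _ => sq_cover E)) => d e Ede Hd He /= Hsq.
have dge : s <= d.
  have : d * e <= d * (2 * 3 * s) by rewrite leq_mul2l He orbT.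
  rewrite Ede EA => H.
  have Hp : 0 < 2 * 3 * s by nia.
  by rewrite -(leq_pmul2r Hp); nia.
have : d \in divl [:: 2; 3; s; s].
  apply: divl4; last by rewrite /= ps.
  by apply/dvdnP; exists e; rewrite [e * d]mulnC Ede EA.
rewrite /divl /= !inE !muln1.
repeat (case/orP; [move/eqP=> Ed; subst d | ]); try (move/eqP=> Ed; subst d).
all: first [ by rewrite eqxx ?orbT | by rewrite (_ : 2 * 3 = 6) // eqxx ?orbT | exfalso; nia
           | (have E : s = 2 by nia); subst s; by [] ].
Qed.

Lemma SP1 x u v A : prime x -> prime u -> prime v -> 5 <= x -> u <= v ->
  x * A = (x * u * v) * (x * u * v) -> Sel (x * u * v) A x -> False.
Proof.
move=> px pu pv x5 uv HA S.
have u2 := prime_gt1 pu; have v2 := prime_gt1 pv.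
have EA : A = x * (u * u * (v * v)) by nia.
have cov : forall w h, w * h = A -> w <= x * u * v -> h <= x * u * v ->
    (w %| u * u * (v * v)) || (h %| u * u * (v * v)).
  by move=> w h E _ _; apply: (gauss_split px); rewrite E EA.
have key : forall d e, d * e = A -> d <= x * u * v -> e <= x * u * v ->
    d %| u * u * (v * v) -> (u * v <= d) /\ (d \in divl [:: u; u; v; v]).
  move=> d e Ede Hd He Hdv; split; last by apply: divl4 => //=; rewrite pu pv.
  have : d * e <= d * (x * u * v) by rewrite leq_mul2l He orbT.
  rewrite Ede EA => H.
  have Hp : 0 < x * u * v by nia.
  by rewrite -(leq_pmul2r Hp); nia.
case: (eqVneq u v) => [Euv|Nuv].
{ subst v.
  suff : x <= size [:: u * u; u * (u * u); u * (u * (u * u))] by rewrite /=; lia.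
  apply: (S _ _ cov) => d e Ede Hd He Hdv.
  have [dge] := key d e Ede Hd He Hdv.
  rewrite /divl /= !inE !muln1.
  repeat (case/orP; [move/eqP=> Ed; subst d | ]); try (move/eqP=> Ed; subst d).
  all: first [ by rewrite eqxx ?orbT | exfalso; nia ]. }
have uv' : u < v by rewrite ltn_neqAle Nuv uv.
case: (eqVneq x 5) => [Ex|Nx].
{ subst x.
  suff : 5 <= size [:: u * v; u * (u * v); u * (v * v); v * v] by [].
  apply: (S _ _ cov) => d e Ede Hd He Hdv.
  have [dge] := key d e Ede Hd He Hdv.
  rewrite /divl /= !inE !muln1.
  repeat (case/orP; [move/eqP=> Ed; subst d | ]); try (move/eqP=> Ed; subst d).
  all: first [ by rewrite eqxx ?orbT | exfalso; nia ]. }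
suff : x <= size [:: u * v; u * (u * v); u * (v * v); v * v; u * (u * (v * v))].
  rewrite /=; lia.
apply: (S _ _ cov) => d e Ede Hd He Hdv.
have [dge] := key d e Ede Hd He Hdv.
rewrite /divl /= !inE !muln1.
repeat (case/orP; [move/eqP=> Ed; subst d | ]); try (move/eqP=> Ed; subst d).
all: first [ by rewrite eqxx ?orbT | exfalso; nia ].
Qed.

Lemma size_mask_split (s : seq nat) m : size m = size s ->
  size (mask m s) + size (mask (map negb m) s) = size s.
Proof.
elim: s m => [|x s IH] [|b m] //= /eqP; rewrite eqSS => /eqP Hm.
by case: b => /=; rewrite -(IH _ Hm) ?addSn ?addnS.
Qed.

Lemma prodl_cat s t : prodl (s ++ t) = prodl s * prodl t.
Proof. by elim: s => /= [|x s ->]; rewrite ?mul1n ?mulnA. Qed.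

Lemma pick3 x p q r : x \in [:: p; q; r] ->
  exists u v, [/\ p * q * r = x * u * v, u \in [:: p; q; r], v \in [:: p; q; r] &
    forall t, t \in [:: p; q; r] -> t = x \/ t \in [:: u; v]].
Proof.
rewrite !inE => /or3P [] /eqP ->.
- exists q, r; split; rewrite ?inE ?eqxx ?orbT //.
  by move=> t; rewrite !inE => /or3P [] /eqP ->; rewrite ?eqxx ?orbT; auto.
- exists p, r; split; rewrite ?inE ?eqxx ?orbT //; first by rewrite [p * q]mulnC.
  by move=> t; rewrite !inE => /or3P [] /eqP ->; rewrite ?eqxx ?orbT; auto.
- exists p, q; split; rewrite ?inE ?eqxx ?orbT //; first by rewrite mulnC mulnA.
  by move=> t; rewrite !inE => /or3P [] /eqP ->; rewrite ?eqxx ?orbT; auto.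
Qed.

Lemma SP1' x u v A : prime x -> prime u -> prime v -> 5 <= x ->
  x * A = (x * u * v) * (x * u * v) -> Sel (x * u * v) A x -> False.
Proof.
move=> px pu pv x5 HA S.
case: (leqP u v) => uv; first exact: (SP1 px pu pv x5 uv HA S).
have E : x * v * u = x * u * v by rewrite mulnAC.
rewrite -E in HA S; exact: (SP1 px pv pu x5 (ltnW uv) HA S).
Qed.

Lemma SP2' u v A : prime u -> prime v -> 4 * A = (2 * u * v) * (2 * u * v) ->
  Sel (2 * u * v) A 4 -> False.
Proof.
move=> pu pv HA S.
case: (leqP u v) => uv; first exact: (SP2 pu pv uv HA S).
have E : 2 * v * u = 2 * u * v by rewrite mulnAC.
rewrite -E in HA S; exact: (SP2 pv pu (ltnW uv) HA S).
Qed.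

Lemma small_prime x : prime x -> x <= 4 -> (x == 2) || (x == 3).
Proof. by case: x => [|[|[|[|[|x]]]]]. Qed.

Lemma NT n k A N : all prime N -> (size N = 2) \/ (size N = 3) -> n = prodl N ->
  k * A = n * n -> 4 <= k -> Sel n A k -> False.
Proof.
move=> pN sN En HkA k4 S.
have pNN : all prime (N ++ N) by rewrite all_cat pN.
have HNN : n * n = prodl (N ++ N) by rewrite prodl_cat En.
have kd : k %| prodl (N ++ N) by rewrite -HNN -HkA dvdn_mulr.
have [mu Hmu Ek] := dvd_prodl pNN kd.
set K := mask mu (N ++ N) in Ek; set M := mask (map negb mu) (N ++ N).
have pK : all prime K by apply: all_mask.
have pM : all prime M by apply: all_mask.
have EA : A = prodl M.
  apply/eqP; rewrite -(eqn_pmul2l (leq_trans _ k4)) //.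
  by rewrite HkA HNN (prodl_mask Hmu) -Ek.
have Hs : size K + size M = 2 * size N.
  by rewrite size_mask_split // size_cat addnn mul2n.
have Hgen : k <= 2 ^ (size M).-1.
  case EM : M => [|e T].
    rewrite EM /= in EA; rewrite expn0.
    suff : k <= size [:: 1] by [].
    apply: (S predT) => // d e' Ede _ _ _.
    by move: Ede; rewrite EA => /eqP; rewrite muln_eq1 => /andP [/eqP -> _]; rewrite inE.
  rewrite EM /= in EA pM; case/andP: pM => pe pT.
  rewrite -(size_divl T).
  apply: (S (fun d => d %| prodl T)).
    by move=> w h E _ _; apply: (gauss_split pe); rewrite E EA.
  by move=> d e' _ _ _ Hd; apply: mem_divl.
have kge : 2 ^ size K <= k by rewrite Ek; apply: prodl_ge.
case: (leqP (size N) (size K)) => HK.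
  have : 2 ^ (size M).-1 < 2 ^ size K by rewrite ltn_exp2l //; case: sN => -> in Hs HK *; lia.
  lia.
case: sN => sN3.
-
  move: HK Hs Ek pK kge Hgen; rewrite sN3; case: K => [|x [|y K']] //= HK Hs Ek pK kge Hgen.
  + lia.
  + have Ex : k = x by rewrite Ek muln1.
    have : size M = 3 by lia.
    move=> HM; rewrite HM /= in Hgen.
    have k4' : k = 4 by lia.
    by move: pK; rewrite -Ex k4'.
-
  have [p [q [r EN]]] : exists p q r, N = [:: p; q; r].
    by move: sN3; case: N {K M Ek EA Hs Hgen kge HK pK pM Hmu HNN kd pNN En pN} => [|p [|q [|r [|? ?]]]] //= _; exists p, q, r.
  have KN : {subset K <= [:: p; q; r]}.
    by move=> t /mem_mask; rewrite mem_cat orbb EN.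
  have En' : n = p * q * r by rewrite En EN /= muln1 mulnA.
  have pN' : all prime [:: p; q; r] by rewrite -EN.
  have pr t : t \in [:: p; q; r] -> prime t by move/(allP pN').
  move: HK Hs Ek pK kge Hgen KN; rewrite sN3; case: K => [|x [|y K']] //= HK Hs Ek pK kge Hgen KN.
  + lia.
  + have Ex : k = x by rewrite Ek muln1.
    have xN : x \in [:: p; q; r] by apply: KN; rewrite inE eqxx.
    have px := pr _ xN.
    have x5 : 5 <= x.
      have : x != 4 by apply/eqP => E; move: px; rewrite E.
      lia.
    have [u [v [Euv uN vN _]]] := pick3 xN.
    rewrite Ex En' Euv in HkA S.
    exact: (SP1' px (pr _ uN) (pr _ vN) x5 HkA S).
  + case: K' HK Hs Ek pK kge Hgen KN => [|? ?] //= HK Hs Ek pK kge Hgen KN.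
    have xN : x \in [:: p; q; r] by apply: KN; rewrite inE eqxx.
    have yN : y \in [:: p; q; r] by apply: KN; rewrite !inE eqxx orbT.
    have px := pr _ xN; have py := pr _ yN.
    have HM : size M = 4 by lia.
    rewrite HM /= in Hgen.
    have x2 := prime_gt1 px; have y2 := prime_gt1 py.
    have Ek' : k = x * y by rewrite Ek muln1.
    case/orP: (small_prime px ltac:(nia)) => /eqP Ex;
    case/orP: (small_prime py ltac:(nia)) => /eqP Ey; subst x y.
    *
      have [u [v [Euv uN vN _]]] := pick3 xN.
      rewrite Ek' En' Euv in HkA S.
      exact: (SP2' (pr _ uN) (pr _ vN) HkA S).
    *
      have [u [v [Euv uN vN H3]]] := pick3 xN.
      have [//|] := H3 _ yN; rewrite !inE => /orP [] /eqP E3.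
      - rewrite Ek' En' Euv -E3 in HkA S.
        exact: (SP3 (pr _ vN) HkA S).
      - have E : 2 * u * v = 2 * 3 * u by rewrite -E3 mulnAC.
        rewrite Ek' En' Euv E in HkA S.
        exact: (SP3 (pr _ uN) HkA S).
    * have [u [v [Euv uN vN H3]]] := pick3 yN.
      have [//|] := H3 _ xN; rewrite !inE => /orP [] /eqP E3.
      - have E : 3 * 2 = 2 * 3 by [].
        rewrite Ek' E En' Euv -E3 in HkA S.
        exact: (SP3 (pr _ vN) HkA S).
      - have E : 2 * u * v = 2 * 3 * u by rewrite -E3 mulnAC.
        rewrite Ek' En' Euv E (_ : 3 * 2 = 2 * 3) // in HkA S.
        exact: (SP3 (pr _ uN) HkA S).
    * lia.
Qed.


Lemma sum_ind a w n : \sum_(i < n) ((a <= i) && (i < a + w)) = minn (a + w) n - minn a n.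
Proof.
elim: n => [|n IH]; first by rewrite big_ord0; lia.
rewrite big_ord_recr /= IH.
case: (boolP ((a <= n) && (n < a + w))) => H /=; lia.
Qed.

Lemma sum_cell r n : rx r + rw r <= n -> ry r + rh r <= n ->
  \sum_(i < n) \sum_(j < n) cell_in r i j = area r.
Proof.
move=> Hx Hy; rewrite /cell_in /area.
transitivity (\sum_(i < n) (((rx r <= i) && (i < rx r + rw r)) * rh r)).
  apply: eq_bigr => i _.
  case: ((rx r <= i) && (i < rx r + rw r)) => /=; last by rewrite mul0n big1.
  by rewrite mul1n sum_ind; lia.
by rewrite -big_distrl /= sum_ind; congr (_ * _); lia.
Qed.

Lemma count_sum (s : seq rect) i j :
  count (fun r => cell_in r i j) s = \sum_(r <- s) cell_in r i j.
Proof. by elim: s => [|r s IH]; rewrite ?big_nil ?big_cons //= IH. Qed.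

Lemma sum_idx (s : seq rect) (F : rect -> nat) :
  \sum_(r <- s) F r = \sum_(a < size s) F (nth rect0 s a).
Proof. by rewrite (big_nth rect0) big_mkord. Qed.

Lemma area_total n s : mondrian_partition n s ->
  \sum_(a < size s) area (nth rect0 s a) = n * n.
Proof.
case=> _ Hin Hc _.
transitivity (\sum_(i < n) \sum_(j < n) count (fun r => cell_in r i j) s).
  apply: esym.
  under eq_bigr => i _ do under eq_bigr => j _ do rewrite count_sum sum_idx.
  under eq_bigr => i _ do rewrite exchange_big /=.
  rewrite exchange_big /=.
  apply: eq_bigr => a _.
  have [_ _ Hx Hy] := Hin a (ltn_ord a).
  first [by rewrite sum_cell | by rewrite exchange_big sum_cell].
under eq_bigr => i _ do under eq_bigr => j _ do rewrite Hc //.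
under eq_bigr => i _ do rewrite sum1_card card_ord.
by rewrite sum_nat_const card_ord.
Qed.

Lemma cong_side r1 r2 d : (d = rw r1 \/ d = rh r1) -> (d = rw r2 \/ d = rh r2) ->
  0 < d -> area r1 = area r2 -> congruent r1 r2.
Proof.
case: r1 r2 => x1 y1 w1 h1 [x2 y2 w2 h2]; rewrite /area /congruent /=.
move=> [] -> [] E Hd Ha; subst.
- by apply/orP; left; rewrite eqxx /=; apply/eqP; nia.
- by apply/orP; right; rewrite eqxx /=; apply/eqP; nia.
- by apply/orP; right; rewrite eqxx andbT; apply/eqP; nia.
- by apply/orP; left; rewrite eqxx andbT; apply/eqP; nia.
Qed.

Lemma sel_lemma n s A : mondrian_partition n s ->
  (forall a, a < size s -> area (nth rect0 s a) = A) -> Sel n A (size s).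
Proof.
move=> [_ Hin _ Hnc] HA P L Hcov Hmem.
pose f r := if P (rw r) then rw r else rh r.
have fside r : f r = rw r \/ f r = rh r by rewrite /f; case: (P (rw r)); auto.
have Hu : uniq (map f s).
  apply/(uniqP 0) => i j; rewrite !inE size_map => Hi Hj.
  rewrite !(nth_map rect0) // => E.
  case: (eqVneq i j) => // Nij; exfalso.
  have := Hnc i j Hi Hj (elimN eqP Nij); apply/negP/negPn.
  have [Hw _ _ _] := Hin i Hi; have [Hw' Hh' _ _] := Hin j Hj.
  apply: (cong_side (d := f (nth rect0 s i))).
  - exact: fside.
  - rewrite E; exact: fside.
  - have [Hw1 Hh1 _ _] := Hin i Hi.
    by case: (fside (nth rect0 s i)) => ->.
  - by rewrite HA // HA.
rewrite -(size_map f); apply: uniq_leq_size Hu _ => d /(nthP 0) [i].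
rewrite size_map => Hi; rewrite (nth_map rect0) // => <-.
have [_ _ Hx Hy] := Hin i Hi.
have Ea := HA i Hi; rewrite /area in Ea.
have Hw : rw (nth rect0 s i) <= n by lia.
have Hh : rh (nth rect0 s i) <= n by lia.
have := Hcov _ _ Ea Hw Hh; rewrite /f.
case: ifP => Pw Hc; first exact: Hmem _ _ Ea Hw Hh Pw.
simpl in Hc.
by apply: (Hmem _ (rw (nth rect0 s i))) => //; rewrite mulnC.
Qed.

Lemma case_k2 n s : perfect_mondrian_partition n s -> size s = 2 -> False.
Proof.
case: s => [|r1 [|r2 [|? ?]]] // [Hm Ha] _.
have Ht := area_total Hm.
case: Hm => _ Hin Hc Hnc.
apply: (@main2 n r1 r2); split.
- by split; [exact: (Hin 0) | exact: (Hin 1)].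
- by move=> i j Hi Hj; have := Hc i j Hi Hj; rewrite /= addn0.
- exact: (Ha 0 1).
- by move: Ht; rewrite !big_ord_recr big_ord0 /= (Ha 1 0) // add0n addnn mul2n.
- by apply: (Hnc 0 1).
Qed.

Lemma case_k3 n s : perfect_mondrian_partition n s -> size s = 3 -> False.
Proof.
case: s => [|r1 [|r2 [|r3 [|? ?]]]] // [Hm Ha] _.
have Ht := area_total Hm.
case: Hm => _ Hin Hc Hnc.
apply: (@main3 n r1 r2 r3); split.
- by split; [exact: (Hin 0) | exact: (Hin 1) | exact: (Hin 2)].
- by move=> i j Hi Hj; have := Hc i j Hi Hj; rewrite /= addn0 addnA.
- by split; [exact: (Ha 0 1) | exact: (Ha 0 2)].
- move: Ht; rewrite !big_ord_recr big_ord0 /= (Ha 1 0) // (Ha 2 0) // add0n.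
  move=> H; simpl in H; lia.
- by split; [apply: (Hnc 0 1) | apply: (Hnc 0 2) | apply: (Hnc 1 2)].
Qed.

Unset Implicit Arguments.

Theorem mainTheorem10 (n : nat) :
  (exists p q, [/\ prime p, prime q & n = p * q]) \/
  (exists p q r, [/\ prime p, prime q, prime r & n = p * q * r]) ->
  ~ (exists s : seq rect, perfect_mondrian_partition n s).
Proof.
move=> Hn [s Hs].
have Hs' := Hs; case: Hs' => Hm Ha.
have k2 : 2 <= size s by case: Hm.
case Ek2 : (size s == 2); first exact: case_k2 Hs (eqP Ek2).
case Ek3 : (size s == 3); first exact: case_k3 Hs (eqP Ek3).
have k4 : 4 <= size s by move/negbT: Ek2; move/negbT: Ek3; lia.
set A := area (nth rect0 s 0).
have HA a : a < size s -> area (nth rect0 s a) = A by move=> Ha'; apply: Ha; lia.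
have Htot : size s * A = n * n.
  rewrite -(area_total Hm).
  under eq_bigr => a _ do rewrite HA //.
  by rewrite sum_nat_const card_ord.
have S := sel_lemma Hm HA.
case: Hn => [[p [q [pp pq En]]] | [p [q [r [pp pq pr En]]]]].
- apply: (@NT n (size s) A [:: p; q]) => //=; first by rewrite pp pq.
  + by left.
  + by rewrite En muln1.
- apply: (@NT n (size s) A [:: p; q; r]) => //=; first by rewrite pp pq pr.
  + by right.
  + by rewrite En muln1 mulnA.
Qed.
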